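(* Let $f:\mathbb{R}^n\to\mathbb{R}^m$ be continuous at $\bar x\in\mathbb{R}^n$. Then $f$ is strongly regular around $\bar x$ if and only if $f$ is both linearly open (equivalently, metrically regular) around $\bar x$ and metrically injective around $\bar x$. In this case $\operatorname{inj}(f,\bar x)\ge\operatorname{lop}(f,\bar x)$.
   Context: $B(x,r)$ and $B^\circ(x,r)$ denote closed and open balls. $f$ is linearly open around $\bar x$ if there exist $\alpha>0$ and neighbourhoods $U$ of $\bar x$, $V$ of $f(\bar x)$ with $B^\circ(f(x),\alpha r)\cap V\subseteq f(B^\circ(x,r))$ for all $x\in U$, $r>0$; $\operatorname{lop}(f,\bar x)$ is the supremum of such $\alpha$ ($0$ if none). (Equivalently, $f$ is metrically regular around $\bar x$: there exist $\kappa>0$ and neighbourhoods $U,V$ with $\operatorname{dist}(x,f^{-1}(y))\le\kappa\|y-f(x)\|$ for all $(x,y)\in U\times V$; the infimum of such $\kappa$ is $\operatorname{reg}(f,\bar x)$, and $\operatorname{lop}(f,\bar x)\cdot\operatorname{reg}(f,\bar x)=1$.) $f$ is strongly regular around $\bar x$ if it is linearly open around $\bar x$ and there exist neighbourhoods $U$ of $\bar x$ and $V$ of $f(\bar x)$ such that $f^{-1}(y)\cap U$ is a singleton for every $y\in V$. $f$ is metrically injective around $\bar x$ if there exist $\beta,\delta>0$ with $\|f(x_1)-f(x_2)\|\ge\beta\|x_1-x_2\|$ for all $x_1,x_2\in B(\bar x,\delta)$; $\operatorname{inj}(f,\bar x)$ is the supremum of such $\beta$. *)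

(* Defs.v *)
(* R^n is modelled as 'rV[R]_n with the Euclidean norm. *)
From HB Require Import structures.
From mathcomp Require Import all_boot all_order all_algebra.
From mathcomp Require Import all_classical all_reals all_analysis.
Set Implicit Arguments. Unset Strict Implicit. Unset Printing Implicit Defensive.
Import Order.TTheory GRing.Theory Num.Theory.
Import numFieldNormedType.Exports.
Local Open Scope classical_set_scope.
Local Open Scope ring_scope.

Section Defs.
Variable R : realType.

Definition enorm (n : nat) (v : 'rV[R]_n) : R :=
  Num.sqrt (\sum_(i < n) (v ord0 i) ^+ 2).

Definition cball (n : nat) (x : 'rV[R]_n) (r : R) : set 'rV[R]_n :=
  [set y | enorm (y - x) <= r].
Definition oball (n : nat) (x : 'rV[R]_n) (r : R) : set 'rV[R]_n :=
  [set y | enorm (y - x) < r].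

Definition is_nbhd (n : nat) (x : 'rV[R]_n) (U : set 'rV[R]_n) : Prop :=
  exists r : R, 0 < r /\ oball x r `<=` U.

Definition lin_open_with (n m : nat) (f : 'rV[R]_n -> 'rV[R]_m)
    (xbar : 'rV[R]_n) (alpha : R) : Prop :=
  exists (U : set 'rV[R]_n) (V : set 'rV[R]_m),
    is_nbhd xbar U /\ is_nbhd (f xbar) V /\
    forall x r, U x -> 0 < r ->
      oball (f x) (alpha * r) `&` V `<=` f @` oball x r.

Definition linearly_open (n m : nat) (f : 'rV[R]_n -> 'rV[R]_m)
    (xbar : 'rV[R]_n) : Prop :=
  exists alpha : R, 0 < alpha /\ lin_open_with f xbar alpha.

(* lop(f,xbar): supremum of admissible alpha, 0 if there is none
   (valued in the extended reals, since it may be +oo) *)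
Definition lop (n m : nat) (f : 'rV[R]_n -> 'rV[R]_m) (xbar : 'rV[R]_n)
    : \bar R :=
  ereal_sup ([set (a%:E)%E | a in [set a : R | 0 < a /\ lin_open_with f xbar a]]
             `|` [set 0%E]).

Definition metr_inj_with (n m : nat) (f : 'rV[R]_n -> 'rV[R]_m)
    (xbar : 'rV[R]_n) (beta : R) : Prop :=
  exists delta : R, 0 < delta /\
    forall x1 x2, cball xbar delta x1 -> cball xbar delta x2 ->
      beta * enorm (x1 - x2) <= enorm (f x1 - f x2).

Definition metrically_injective (n m : nat) (f : 'rV[R]_n -> 'rV[R]_m)
    (xbar : 'rV[R]_n) : Prop :=
  exists beta : R, 0 < beta /\ metr_inj_with f xbar beta.

Definition injf (n m : nat) (f : 'rV[R]_n -> 'rV[R]_m) (xbar : 'rV[R]_n)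
    : \bar R :=
  ereal_sup ([set (b%:E)%E | b in [set b : R | 0 < b /\ metr_inj_with f xbar b]]
             `|` [set 0%E]).

Definition strongly_regular (n m : nat) (f : 'rV[R]_n -> 'rV[R]_m)
    (xbar : 'rV[R]_n) : Prop :=
  linearly_open f xbar /\
  exists (U : set 'rV[R]_n) (V : set 'rV[R]_m),
    is_nbhd xbar U /\ is_nbhd (f xbar) V /\
    forall y, V y -> exists! x, U x /\ f x = y.

End Defs.

(* Main.v *)
Require Import Defs.
From mathcomp Require Import all_boot all_order all_algebra.
From mathcomp Require Import all_classical all_reals all_analysis.
From mathcomp Require Import ring lra.
Import Order.TTheory GRing.Theory Num.Theory.
Import numFieldNormedType.Exports.
Local Open Scope classical_set_scope.
Local Open Scope ring_scope.

Section CS.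
Variable R : realType.
Variable n : nat.
Implicit Types a b : 'I_n -> R.

Lemma cs_sq a b : (\sum_i a i * b i) ^+ 2 <= (\sum_i a i ^+ 2) * (\sum_i b i ^+ 2).
Proof.
set A := \sum_i a i ^+ 2; set B := \sum_i b i ^+ 2; set C := \sum_i a i * b i.
have A0 : 0 <= A by apply: sumr_ge0 => i _; exact: sqr_ge0.
have [A00|Apos] := eqVneq A 0.
  have ai0 : forall i, a i = 0.
    move=> i; have /psumr_eq0P H := A00.
    by apply/eqP; rewrite -sqrf_eq0; apply/eqP; apply: H => // j _; exact: sqr_ge0.
  have -> : C = 0 by rewrite /C big1 // => i _; rewrite ai0 mul0r.
  by rewrite A00 expr0n /= mul0r.
have Agt : 0 < A by rewrite lt_def Apos A0.
have H : 0 <= \sum_i (C * a i - A * b i) ^+ 2 by apply: sumr_ge0 => i _; exact: sqr_ge0.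
have E : \sum_i (C * a i - A * b i) ^+ 2 = C ^+ 2 * A - 2 * C * A * C + A ^+ 2 * B.
  have -> : C ^+ 2 * A - 2 * C * A * C + A ^+ 2 * B =
     \sum_i (C ^+ 2 * a i ^+ 2 - 2 * C * A * (a i * b i) + A ^+ 2 * b i ^+ 2).
    by rewrite !big_split /= sumrN -!mulr_sumr.
  by apply: eq_bigr => i _; ring.
rewrite E in H.
have : 0 <= A * (A * B - C ^+ 2).
  by have -> : A * (A * B - C ^+ 2) = C ^+ 2 * A - 2 * C * A * C + A ^+ 2 * B by ring.
rewrite pmulr_rge0 // subr_ge0 => //.
Qed.
End CS.

Section Enorm.
Variable R : realType.
Variable n : nat.
Implicit Types u v : 'rV[R]_n.

Lemma enorm_ge0 v : 0 <= enorm v.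
Proof. exact: sqrtr_ge0. Qed.

Lemma enormN v : enorm (- v) = enorm v.
Proof. by rewrite /enorm; congr Num.sqrt; apply: eq_bigr => i _; rewrite mxE sqrrN. Qed.

Lemma enormB u v : enorm (u - v) = enorm (v - u).
Proof. by rewrite -enormN opprB. Qed.

Lemma enormD u v : enorm (u + v) <= enorm u + enorm v.
Proof.
rewrite /enorm.
set A := \sum_i u ord0 i ^+ 2; set B := \sum_i v ord0 i ^+ 2.
set C := \sum_i u ord0 i * v ord0 i.
have A0 : 0 <= A by apply: sumr_ge0 => i _; exact: sqr_ge0.
have B0 : 0 <= B by apply: sumr_ge0 => i _; exact: sqr_ge0.
have -> : \sum_i (u + v) ord0 i ^+ 2 = A + 2 * C + B.
  rewrite /A /B /C mulr_sumr -!big_split /=.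
  by apply: eq_bigr => i _; rewrite mxE; ring.
have HC : C <= Num.sqrt A * Num.sqrt B.
  rewrite -sqrtrM // (le_trans (ler_norm C)) // -sqrtr_sqr.
  by rewrite ler_wsqrtr //; exact: cs_sq.
have S : 0 <= Num.sqrt A + Num.sqrt B by rewrite addr_ge0 // sqrtr_ge0.
rewrite -(ger0_norm S) -sqrtr_sqr ler_wsqrtr //.
have -> : (Num.sqrt A + Num.sqrt B) ^+ 2 = A + 2 * (Num.sqrt A * Num.sqrt B) + B.
  by rewrite sqrrD !sqr_sqrtr //; ring.
by rewrite lerD2r lerD2l ler_pM2l.
Qed.

Lemma enorm_coord v i : `|v ord0 i| <= enorm v.
Proof.
rewrite -sqrtr_sqr ler_wsqrtr // (bigD1 i) //= lerDl.
by apply: sumr_ge0 => j _; exact: sqr_ge0.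
Qed.

Lemma mxnorm_le_enorm v : `|v| <= enorm v.
Proof.
change (mx_norm v <= enorm v); rewrite mx_normrE.
apply/bigmax_leP; split; first exact: enorm_ge0.
by move=> [i j] _ /=; rewrite (ord1 i); exact: enorm_coord.
Qed.

Lemma enorm_le_mxnorm v : enorm v <= n%:R * `|v|.
Proof.
have N0 : 0 <= `|v| by [].
rewrite -(ger0_norm (mulr_ge0 (ler0n _ n) N0)) -sqrtr_sqr ler_wsqrtr //.
apply: (@le_trans _ _ (\sum_(i < n) `|v| ^+ 2)).
  apply: ler_sum => i _; rewrite -real_normK ?num_real // lerXn2r // ?nnegrE //.
  change (`|v ord0 i| <= mx_norm v); rewrite mx_normrE.
  by apply: (le_bigmax _ (fun ij : 'I_1 * 'I_n => `|v ij.1 ij.2|) (ord0, i)).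
rewrite sumr_const card_ord exprMn -[_ *+ n]mulr_natl ler_wpM2r ?sqr_ge0 //.
rewrite -natrX ler_nat; case: n => // k; rewrite expnS leq_pmulr //.

Qed.
End Enorm.

Lemma cont_enorm (R : realType) n m (f : 'rV[R]_n -> 'rV[R]_m) xbar :
  {for xbar, continuous f} -> forall eps, 0 < eps ->
  exists2 d, 0 < d & forall x, enorm (x - xbar) < d -> enorm (f x - f xbar) < eps.
Proof.
move=> hc eps e0.
have m0 : 0 < m%:R + 1 :> R by rewrite ltr_wpDl.
have e'0 : 0 < eps / (m%:R + 1) by rewrite divr_gt0.
have := @cvgr_dist_lt _ _ _ (nbhs xbar) _ f (f xbar) hc _ e'0.
move=> Hn; have [d /= d0 H] := proj1 (nbhs_ballP _ _) (Hn _).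
exists d => // x hx.
have bx : ball xbar d x.
  rewrite mx_norm_ball /ball_ /= distrC.
  apply: le_lt_trans hx. exact: mxnorm_le_enorm.
have := H x bx; rewrite distrC => hf.
have h1 := @enorm_le_mxnorm R m (f x - f xbar).
have h2 : `|f x - f xbar| * (m%:R + 1) < eps.
  by rewrite -ltr_pdivlMr.
apply: (le_lt_trans h1); apply: le_lt_trans h2.
by rewrite mulrC ler_wpM2l // lerDl.
Qed.

Lemma enorm_tri (R : realType) n (u v w : 'rV[R]_n) :
  enorm (u - w) <= enorm (u - v) + enorm (v - w).
Proof. by have := @enormD R n (u - v) (v - w); rewrite addrA subrK. Qed.

Section Key.
Variables (R : realType) (n m : nat) (f : 'rV[R]_n -> 'rV[R]_m) (xbar : 'rV[R]_n).

Lemma key alpha : 0 < alpha -> lin_open_with f xbar alpha ->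
  (exists (U : set 'rV[R]_n) (V : set 'rV[R]_m),
    is_nbhd xbar U /\ is_nbhd (f xbar) V /\
    forall y, V y -> exists! x, U x /\ f x = y) ->
  {for xbar, continuous f} -> metr_inj_with f xbar alpha.
Proof.
move=> a0 [U1 [V1 [[a1 [a10 hU1]] [[b1 [b10 hV1]] hLO]]]].
move=> [U2 [V2 [[a2 [a20 hU2]] [[b2 [b20 hV2]] hU]]]] hc.
set a := Num.min a1 a2; set b := Num.min b1 b2.
have aa1 : a <= a1 by rewrite ge_min lexx.
have aa2 : a <= a2 by rewrite ge_min lexx orbT.
have bb1 : b <= b1 by rewrite ge_min lexx.
have bb2 : b <= b2 by rewrite ge_min lexx orbT.
have apos : 0 < a by rewrite lt_min a10 a20.
have bpos : 0 < b by rewrite lt_min b10 b20.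
set eps := Num.min b (alpha * a / 4).
have eb : eps <= b by rewrite ge_min lexx.
have ea : eps <= alpha * a / 4 by rewrite ge_min lexx orbT.
have epos : 0 < eps by rewrite lt_min bpos /= divr_gt0 // mulr_gt0.
have [d0 d00 hd] := @cont_enorm R n m f xbar hc _ epos.
set dl := Num.min d0 a.
have dld0 : dl <= d0 by rewrite ge_min lexx.
have dla : dl <= a by rewrite ge_min lexx orbT.
have dlpos : 0 < dl by rewrite lt_min d00 apos.
exists (dl / 2); split; first by rewrite divr_gt0.
move=> x1 x2 hx1 hx2; rewrite /cball /= in hx1 hx2.
have hx1d : enorm (x1 - xbar) < d0 by lra.
have hx2d : enorm (x2 - xbar) < d0 by lra.
have hy1 := hd _ hx1d; have hy2 := hd _ hx2d.
set t := enorm (f x2 - f x1) / alpha.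
set D := enorm (x2 - x1).
have hyy : enorm (f x2 - f x1) <= enorm (f x2 - f xbar) + enorm (f xbar - f x1).
  exact: enorm_tri.
have hyy' : enorm (f xbar - f x1) = enorm (f x1 - f xbar) by exact: (@enormB R m).
have ht : t < a / 2.
  rewrite /t ltr_pdivrMr //.
  have : alpha * a / 4 * 2 = a / 2 * alpha by field.
  lra.
have t0 : 0 <= t by rewrite /t divr_ge0 ?enorm_ge0 // ltW.
have claim : forall r, t < r -> r <= a / 2 -> D < r.
  move=> r tr ra.
  have r0 : 0 < r by lra.
  have x1U1 : U1 x1 by apply: hU1; rewrite /oball /=; lra.
  have fx2o : oball (f x1) (alpha * r) (f x2).
    by rewrite /oball /=; move: tr; rewrite /t ltr_pdivrMr // mulrC.
  have fx2V1 : V1 (f x2) by apply: hV1; rewrite /oball /=; lra.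
  have [x [hx fx]] := hLO x1 r x1U1 r0 (f x2) (conj fx2o fx2V1).
  rewrite /oball /= in hx.
  have fx2V2 : V2 (f x2) by apply: hV2; rewrite /oball /=; lra.
  have [x0 [_ hun]] := hU (f x2) fx2V2.
  have xU2 : U2 x.
    apply: hU2; rewrite /oball /=.
    have := @enorm_tri R n x x1 xbar; lra.
  have x2U2 : U2 x2 by apply: hU2; rewrite /oball /=; lra.
  have e1 := hun x (conj xU2 fx); have e2 := hun x2 (conj x2U2 erefl).
  by rewrite /D -e2 e1.
have DT : D <= t.
  rewrite leNgt; apply/negP => tD.
  set r := Num.min ((t + D) / 2) (a / 2).
  have r1 : r <= (t + D) / 2 by rewrite ge_min lexx.
  have r2 : r <= a / 2 by rewrite ge_min lexx orbT.
  have tr : t < r by rewrite lt_min; apply/andP; split; lra.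
  have := claim r tr r2; lra.
move: DT; rewrite /D /t ler_pdivlMr // => DT.
rewrite enormB [enorm (f x1 - f x2)]enormB; lra.
Qed.
End Key.

Lemma enorm0 (R : realType) n : @enorm R n 0 = 0.
Proof.
by rewrite /enorm big1 ?sqrtr0 // => i _; rewrite mxE expr0n.
Qed.

Lemma enorm_eq0 (R : realType) n (v : 'rV[R]_n) : enorm v <= 0 -> v = 0.
Proof.
move=> h; have h2 := @mxnorm_le_enorm R n v.
apply/eqP; rewrite -normr_le0; exact: le_trans h2 h.
Qed.

Theorem mainTheorem4 (R : realType) (n m : nat) (f : 'rV[R]_n -> 'rV[R]_m)
    (xbar : 'rV[R]_n) (hcont : {for xbar, continuous f}) :
  (strongly_regular f xbar <->
     (linearly_open f xbar /\ metrically_injective f xbar)) /\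
  (strongly_regular f xbar -> (lop f xbar <= injf f xbar)%E).
Proof.
split; first split.
- move=> [[alpha [a0 hlo]] hloc]; split; first by exists alpha.
  by exists alpha; split => //; exact: key.
- move=> [[alpha [a0 hlo]] [beta [b0 [delta [d0 hmi]]]]].
  split; first by exists alpha.
  have hlo' := hlo.
  move: hlo' => [U1 [V1 [[a1 [a10 hU1]] [[b1 [b10 hV1]] hLO]]]].
  have xU1 : U1 xbar by apply: hU1; rewrite /oball /= subrr enorm0.
  exists (oball xbar delta), (oball (f xbar) (Num.min (alpha * delta) b1)).
  split; first by exists delta; split.
  split; first by exists (Num.min (alpha * delta) b1); split => //; rewrite lt_min b10 mulr_gt0 // andbT.
  move=> y hy; rewrite /oball /= lt_min in hy; move/andP: hy => [hy1 hy2].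
  have yV1 : V1 y by apply: hV1.
  have [x hx fx] := hLO xbar delta xU1 d0 y (conj hy1 yV1).
  exists x; split; first by split.
  move=> x' [hx' fx'].
  have := hmi x x' (ltW hx) (ltW hx').
  rewrite fx fx' subrr enorm0 => h.
  have : enorm (x - x') <= 0.
    by rewrite -(@ler_pM2l _ beta) // mulr0.
  by move/enorm_eq0/eqP; rewrite subr_eq0 => /eqP.
- move=> [_ hloc]; apply: ereal_sup_le => z [[a [a0 ha] <-]|->].
    by left; exists a => //; split => //; exact: key.
  by right.
Qed.
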